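(* If $r \geq 3$ and $t \geq r-1$ are integers, then for all $n$, \[ \mathrm{ex}_r ( n , \textup{Berge-}K_{2,t} ) \leq \left( \frac{ r - 1}{t} \binom{t}{r - 1} + 2t + 1 \right) \mathrm{ex}(n , K_{2,t}). \]
   Context: A hypergraph $H$ is a Berge-$F$ (for a graph $F$) if there is a bijection $f : E(F) \to E(H)$ with $e \subseteq f(e)$ for every $e \in E(F)$. $\mathrm{ex}_r(n,\textup{Berge-}F)$ is the maximum number of edges in an $n$-vertex $r$-uniform hypergraph containing no subhypergraph that is a Berge-$F$. $\mathrm{ex}(n,K_{2,t})$ is the usual Turán number: the maximum number of edges in an $n$-vertex graph with no subgraph isomorphic to $K_{2,t}$. *)

(* Defs.v *)
From mathcomp Require Import all_boot all_order all_algebra.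
Set Implicit Arguments. Unset Strict Implicit. Unset Printing Implicit Defensive.

(* A (hyper)graph on a finite vertex type U is its edge set : {set {set U}}. *)

Definition uniform (U : finType) (r : nat) (H : {set {set U}}) : bool :=
  [forall e in H, #|e| == r].

Definition simple_graph (U : finType) (G : {set {set U}}) : bool := uniform 2 G.

Definition has_subgraph (V U : finType) (F : {set {set V}}) (G : {set {set U}}) : bool :=
  [exists phi : {ffun V -> U},
     injectiveb phi && [forall e in F, (phi @: e) \in G]].

Definition has_berge (V U : finType) (F : {set {set V}}) (H : {set {set U}}) : bool :=
  [exists phi : {ffun V -> U}, exists f : {ffun {set V} -> {set U}},
     [&& injectiveb phi,
         [forall e in F, forall e' in F, (f e == f e') ==> (e == e')] &
         [forall e in F, (f e \in H) && ((phi @: e) \subset f e)]]].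

Definition K2t (t : nat) : {set {set ('I_2 + 'I_t)%type}} :=
  [set [set inl i; inr j] | i : 'I_2, j : 'I_t].

Definition ex (V : finType) (n : nat) (F : {set {set V}}) : nat :=
  \max_(G : {set {set 'I_n}} | simple_graph G && ~~ has_subgraph F G) #|G|.

Definition ex_berge (V : finType) (r n : nat) (F : {set {set V}}) : nat :=
  \max_(H : {set {set 'I_n}} | uniform r H && ~~ has_berge F H) #|H|.

(* Main.v *)
Require Import Defs.
From mathcomp Require Import all_boot all_order all_algebra.
From mathcomp Require Import zify.
Set Implicit Arguments. Unset Strict Implicit. Unset Printing Implicit Defensive.

Definition N (U : finType) (G : {set {set U}}) (g : {set U}) : {set U} :=
  [set w | [forall x in g, [set x; w] \in G]].

Lemma imset2s (A B : finType) (f : A -> B) x y : f @: [set x; y] = [set f x; f y].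
Proof. by rewrite imsetU1 imset_set1. Qed.

Lemma nbhd_small (U : finType) t (G : {set {set U}}) g :
  simple_graph G -> ~~ has_subgraph (K2t t) G -> g \in G -> #|N G g| < t.
Proof.
move=> sG nK gG; rewrite ltnNge; apply/negP => tN.
have c2 : #|g| == 2 by move/forallP: sG => /(_ g); rewrite gG.
case/cards2P: c2 => u [v [uv eg]].
have notN w : w \in g -> w \notin N G g.
  move=> wg; apply/negP; rewrite inE => /forallP /(_ w); rewrite wg /= setUid.
  move=> wG; move/forallP: sG => /(_ [set w]); rewrite wG cards1 //.
set s := enum (N G g).
have ss : size s = #|N G g| by rewrite cardE.
have us : uniq s by apply: enum_uniq.
have sN j : j < t -> nth u s j \in N G g.
  by move=> jt; rewrite -mem_enum mem_nth // ss (leq_trans jt).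
pose phi : {ffun ('I_2 + 'I_t)%type -> U} := [ffun z : ('I_2 + 'I_t)%type => match z with
   inl i => if val i == 0 then u else v | inr j => nth u s j end].
move/negP: nK; apply; apply/existsP; exists phi; apply/andP; split.
  apply/injectiveP => [[i|j] [i'|j']]; rewrite !ffunE.
  - case: i => [[|[|i]] //= ?]; case: i' => [[|[|i']] //= ?] h; try by apply/congr1/val_inj.
    + by rewrite h eqxx in uv.
    + by rewrite h eqxx in uv.
  - move=> h; exfalso; have := sN _ (ltn_ord j'); rewrite -h; apply/negP; apply: notN.
    by rewrite eg; case: ifP => _; rewrite !inE eqxx ?orbT.
  - move=> h; exfalso; have := sN _ (ltn_ord j); rewrite h; apply/negP; apply: notN.
    by rewrite eg; case: ifP => _; rewrite !inE eqxx ?orbT.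
  - move/eqP; rewrite nth_uniq ?ss ?(leq_trans (ltn_ord _)) // => /eqP h.
    by congr inr; apply: val_inj.
apply/forallP => e; apply/implyP => /imset2P H0. case: H0 => i j _ _ eE; rewrite eE.
rewrite imset2s !ffunE.
have : nth u s j \in N G g by apply: sN.
rewrite inE => /forallP H.
by case: ifP => _; apply: (implyP (H _)); rewrite eg !inE eqxx ?orbT.

Qed.
Lemma berge_of_sub (V U : finType) (F : {set {set V}}) (H G : {set {set U}})
  (q : {set U} -> {set U}) :
  (forall g, g \in G -> (q g \in H) && (g \subset q g)) -> {in G &, injective q} ->
  has_subgraph F G -> has_berge F H.
Proof.
move=> hq qinj /existsP [phi /andP [/injectiveP iphi /forallP eF]].
apply/existsP; exists phi; apply/existsP; exists ([ffun e : {set V} => q (phi @: e)] : {ffun {set V} -> {set U}}).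
rewrite (introT (injectiveP _) iphi) /=; apply/andP; split.
  apply/forallP => e; apply/implyP => eF1; apply/forallP => e'; apply/implyP => eF2.
  apply/implyP; rewrite !ffunE => /eqP h; apply/eqP; apply: (imset_inj iphi).
  by apply: qinj => //; [exact: (implyP (eF e) eF1) | exact: (implyP (eF e') eF2)].
apply/forallP => e; apply/implyP => eF1; rewrite ffunE.
exact: hq _ (implyP (eF e) eF1).
Qed.

Definition dom (U : finType) (H : {set {set U}}) (p : {ffun {set U} -> {set U}}) :=
  [set h in H | p h != set0].

Definition good (U : finType) (H : {set {set U}}) (p : {ffun {set U} -> {set U}}) :=
  [forall h in H, (p h == set0) || ((p h \subset h) && (#|p h| == 2))] &&
  [forall x in dom H p, forall y in dom H p, (p x == p y) ==> (x == y)].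

Lemma setU_diff (U : finType) (g h : {set U}) : g \subset h -> g :|: (h :\: g) = h.
Proof.
move=> gh; apply/setP => x; rewrite !inE; case: (boolP (x \in g)) => xg //=.
by rewrite (subsetP gh).
Qed.

Lemma main_bound (U : finType) r t (H : {set {set U}}) :
  2 <= r -> uniform r H -> ~~ has_berge (K2t t) H ->
  exists G : {set {set U}}, [&& simple_graph G, ~~ has_subgraph (K2t t) G &
                #|H| <= #|G| * ('C(t.-1, r - 2)).+1].
Proof.
move=> r2 uH nB.
pose p0 : {ffun {set U} -> {set U}} := [ffun => set0].
have g0 : good H p0.
  apply/andP; split; apply/forallP => x; apply/implyP.
    by rewrite ffunE eqxx.
  by rewrite inE ffunE eqxx andbF.
case: (arg_maxnP (fun p => #|dom H p|) g0) => pm gpm maxp.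
case/andP: gpm => /forallP g1 /forallP g2.
set D := dom H pm.
have DH h : h \in D -> h \in H by rewrite inE => /andP [].
have pmD h : h \in D -> (pm h \subset h) && (#|pm h| == 2).
  move=> hD; have := implyP (g1 h) (DH h hD).
  by move: hD; rewrite inE => /andP [_ /negbTE ->].
have injD : {in D &, injective pm}.
  move=> x y xD yD e; apply/eqP.
  by have := implyP (g2 x) xD => /forallP /(_ y) /implyP /(_ yD) /implyP; apply; rewrite e.
set G := [set pm h | h in D].
have cardG : #|G| = #|D| by rewrite card_in_imset.
have sG : simple_graph G.
  apply/forallP => g; apply/implyP => /imsetP [h hD ->].
  by case/andP: (pmD h hD).
pose q g := odflt set0 [pick h in D | pm h == g].
have qP g : g \in G -> (q g \in D) && (pm (q g) == g).
  case/imsetP => h hD ->; rewrite /q; case: pickP => [h' /andP [-> ->] //|].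
  by move/(_ h); rewrite hD eqxx.
have nK : ~~ has_subgraph (K2t t) G.
  apply/negP => hs; move/negP: nB; apply; apply: (@berge_of_sub _ _ _ _ G q) => //.
    move=> g gG; case/andP: (qP g gG) => qD /eqP e.
    by rewrite DH //=; case/andP: (pmD _ qD); rewrite e.
  move=> g g' gG g'G e.
  case/andP: (qP g gG) => _ /eqP <-; case/andP: (qP g' g'G) => _ /eqP <-.
  by rewrite e.
have maxl (h s : {set U}) : h \in H -> h \notin D -> s \subset h -> #|s| == 2 -> s \in G.
  move=> hH hD sh s2; apply/negPn/negP => sG'.
  have s0 : s != set0 by apply/eqP => e; rewrite e cards0 in s2.
  pose p' : {ffun {set U} -> {set U}} := [ffun x => if x == h then s else pm x].
  have domE : dom H p' = h |: D.
    apply/setP => x; rewrite !inE ffunE; case: (eqVneq x h) => [->|ne] //=.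
    by rewrite hH s0.
  have gp' : good H p'.
    apply/andP; split.
      apply/forallP => x; apply/implyP => xH; rewrite ffunE; case: (eqVneq x h) => [->|_] /=.
        by rewrite sh s2 orbT.
      exact: (implyP (g1 x) xH).
    apply/forallP => x; apply/implyP; rewrite domE => xD.
    apply/forallP => y; apply/implyP; move=> yD; apply/implyP; rewrite !ffunE.
    case: (eqVneq x h) => [ex|xh]; case: (eqVneq y h) => [ey|yh] /=.
    - by rewrite ex ey eqxx.
    - rewrite in_setU1 (negbTE yh) /= in yD.
      by move/eqP => e; rewrite e imset_f in sG'.
    - rewrite in_setU1 (negbTE xh) /= in xD.
      by move/eqP => e; rewrite -e imset_f in sG'.
    - rewrite in_setU1 (negbTE yh) /= in yD; rewrite in_setU1 (negbTE xh) /= in xD.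
      by move/eqP => e; rewrite (injD _ _ xD yD e).
  by have := maxp p' gp'; rewrite domE cardsU1 hD /= ltnn.
pose gh (h : {set U}) := odflt set0 [pick s : {set U} | (s \subset h) && (#|s| == 2)].
have ghP (h : {set U}) : h \in H -> (gh h \subset h) && (#|gh h| == 2).
  move=> hH; rewrite /gh; case: pickP => [s -> //|none].
  have := cards_draws h 2.
  have -> : #|h| = r by apply/eqP; exact: (implyP (forallP uH h) hH).
  have : 0 < 'C(r, 2) by rewrite bin_gt0.
  move=> + e; rewrite -e card_gt0 => /set0Pn [s]; rewrite inE => ss.
  by have := none s; rewrite ss.
set R := H :\: D.
have RH h : h \in R -> h \in H by rewrite inE => /andP [].
have RD h : h \in R -> h \notin D by rewrite inE => /andP [].
have ghG h : h \in R -> gh h \in G.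
  by move=> hR; case/andP: (ghP h (RH h hR)) => a b; apply: maxl (RH h hR) (RD h hR) a b.
have cR : #|R| <= #|G| * 'C(t.-1, r - 2).
  rewrite -sum1_card (partition_big gh (fun g => g \in G)) //= -sum_nat_const.
  apply: leq_sum => g gG; rewrite sum1dep_card.
  have tN : #|N G g| <= t.-1.
    have := nbhd_small sG nK gG; lia.
  apply: leq_trans (leq_bin2l _ tN); rewrite -cards_draws.
  set Fb := [set x | (x \in R) && (gh x == g)].
  have Fsub h : h \in Fb -> g \subset h.
    rewrite inE => /andP [hR /eqP <-]; by case/andP: (ghP h (RH h hR)).
  have finj : {in Fb &, injective (fun h => h :\: g)}.
    move=> x y xF yF /= e.
    by rewrite -(setU_diff (Fsub x xF)) -(setU_diff (Fsub y yF)) e.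
  rewrite -(card_in_imset finj); apply: subset_leq_card; apply/subsetP => z.
  case/imsetP => h hF ->; have hF' := hF; rewrite inE in hF'.
  case/andP: hF' => hR /eqP ghe.
  have [gsub gc2] : (g \subset h) /\ (#|g| == 2).
    by case/andP: (ghP h (RH h hR)); rewrite ghe => -> ->.
  rewrite inE; apply/andP; split.
    apply/subsetP => w; rewrite inE => /andP [wng wh]; rewrite inE.
    apply/forallP => x; apply/implyP => xg; apply: maxl; [exact: RH hR | exact: RD hR | |].
      by apply/subsetP => z'; rewrite !inE => /orP [/eqP ->|/eqP ->] //; apply: (subsetP gsub).
    have xw : x != w by apply/eqP => e; subst w; rewrite xg in wng.
    by rewrite cards2 xw.
  rewrite cardsD (setIidPr gsub) (eqP gc2).
  have -> : #|h| = r by apply/eqP; exact: (implyP (forallP uH h) (RH h hR)).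
  by [].
exists G; rewrite sG nK /=.
rewrite -(cardsID D H) (setIidPr _); last by apply/subsetP => h; apply: DH.
by rewrite -cardG mulnS leq_add2l.
Qed.

Lemma nat_bound (r t n : nat) : 3 <= r ->
  ex_berge r n (K2t t) <= ex n (K2t t) * ('C(t.-1, r - 2)).+1.
Proof.
move=> r3; apply/bigmax_leqP => H /andP [uH nB].
have r2 : 2 <= r by apply: leq_trans r3.
case: (main_bound r2 uH nB) => G /and3P [sG nK le].
apply: leq_trans le _; rewrite leq_mul2r; apply/orP; right.
by apply: leq_bigmax_cond; rewrite sG nK.
Qed.

Import Order.TTheory GRing.Theory Num.Theory.
Local Open Scope ring_scope.

Theorem theorem1p5 (r t n : nat) (hr : (3 <= r)%N) (ht : (r - 1 <= t)%N) :
  ((ex_berge r n (K2t t))%:R : rat) <=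
    ((r - 1)%:R / t%:R * ('C(t, r - 1))%:R + 2 * t%:R + 1)
      * (ex n (K2t t))%:R.
Proof.
have t0 : (0 < t)%N by apply: leq_trans ht; rewrite subn_gt0 (leq_trans _ hr).
have key : (r - 1)%:R / t%:R * ('C(t, r - 1))%:R = ('C(t.-1, r - 2))%:R :> rat.
  have e : (t * 'C(t.-1, r - 2) = (r - 1) * 'C(t, r - 1))%N.
    by rewrite mul_bin_diag; have -> : ((r - 2).+1 = r - 1)%N by lia.
  have tn0 : t%:R != 0 :> rat by rewrite pnatr_eq0 -lt0n.
  apply: (mulfI tn0); rewrite mulrA mulrCA mulfV // mulr1 -!natrM. 
  by rewrite e.
rewrite key mulrC.
apply: le_trans (_ : (ex n (K2t t) * ('C(t.-1, r - 2)).+1)%:R <= _).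
  by rewrite ler_nat nat_bound.
rewrite natrM ler_wpM2l ?ler0n // -addn1 natrD -addrA lerD2l.
by rewrite lerDr mulr_ge0 ?ler0n.
Qed.
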